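(* In the setting below, let $Z$ be a chain and let $P\in\mathcal{R}\cup\mathcal{B}$. If two vertices $v,v'$ both lie on $Z$ and on $P$, and $v$ appears before $v'$ on $Z$, then $v$ appears before $v'$ on $P$ (with $P$ oriented from $S_1$ to $T_1$ if red, from $S_2$ to $T_2$ if blue).
   Context: Setting: $G$ is a graph; $S_1,T_1,S_2,T_2\subseteq V(G)$ are pairwise disjoint sets of $k$ vertices each, all of degree $1$ in $G$, with $(S_1,T_1)$ and $(S_2,T_2)$ each routable in $G$ (connected by $k$ node-disjoint paths). $H$ is an $(S_1,T_1,S_2,T_2)$-minimal minor of $G$: a minor of $G$ containing the vertices of $S_1\cup T_1\cup S_2\cup T_2$ as vertices (each with singleton branch set), in which both pairs are routable, and such that deleting or contracting any edge of $H$ destroys one of these properties. $\mathcal{R}$ (red paths) is a set of $k$ node-disjoint paths routing $(S_1,T_1)$ in $H$, and $\mathcal{B}$ (blue paths) is a set of $k$ node-disjoint paths routing $(S_2,T_2)$ in $H$. $\tilde H$ is the directed graph on $V(H)$ whose edges are the edges of red paths directed from $S_1$ toward $T_1$ (red edges) and the edges of blue paths directed from $S_2$ toward $T_2$ (blue edges). A chain is a directed (not necessarily simple) walk $e_1,\dots,e_r$ in $\tilde H$ whose edges alternate in color. *)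

(* Defs.v *)
From HB Require Import structures.
From mathcomp Require Import all_boot.
Set Implicit Arguments. Unset Strict Implicit. Unset Printing Implicit Defensive.

Definition simple_graph (V : finType) (E : rel V) : Prop :=
  symmetric E /\ irreflexive E.

Definition linkage (W : finType) (F : rel W) (S T : {set W}) (k : nat)
    (L : seq (seq W)) : Prop :=
  size L = k /\
  (forall p, p \in L -> exists x s,
      [/\ p = x :: s, path F x s, uniq p, x \in S & last x s \in T]) /\
  (forall i j, i < k -> j < k -> i != j ->
      forall x, x \in nth [::] L i -> x \notin nth [::] L j).

Definition routable (W : finType) (F : rel W) (S T : {set W}) (k : nat) : Prop :=
  exists L, linkage F S T k L.

Definition minor_model (V W : finType) (E : rel V) (F : rel W)
    (beta : W -> {set V}) : Prop :=
  [/\ (forall w, beta w != set0),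
      (forall w w', w != w' -> [disjoint beta w & beta w']),
      (forall w a b, a \in beta w -> b \in beta w ->
         connect (fun x y => [&& E x y, x \in beta w & y \in beta w]) a b)
    & (forall w w', F w w' -> exists a b, [/\ a \in beta w, b \in beta w' & E a b])].

Definition terminals (V : finType) (S1 T1 S2 T2 : {set V}) : {set V} :=
  S1 :|: T1 :|: S2 :|: T2.

(* (W,F), with terminal x of G identified with the vertex h x, is a minor of
   (V,E) containing the terminals with singleton branch sets, in which both
   pairs are routable. *)
Definition good_minor (V : finType) (E : rel V) (S1 T1 S2 T2 : {set V}) (k : nat)
    (W : finType) (F : rel W) (h : V -> W) : Prop :=
  exists beta : W -> {set V},
    [/\ minor_model E F beta,
        (forall x, x \in terminals S1 T1 S2 T2 -> beta (h x) = [set x]),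
        routable F (h @: S1) (h @: T1) k
      & routable F (h @: S2) (h @: T2) k].

Definition del_edge (W : finType) (F : rel W) (u v : W) : rel W :=
  fun x y => F x y && ~~ (((x == u) && (y == v)) || ((x == v) && (y == u))).

(* Contracting the edge uv: v is merged into u (the merged vertex is u). *)
Definition contr_edge (W : finType) (F : rel W) (u v : W) : rel {w : W | w != v} :=
  fun x y => (val x != val y) &&
    [|| F (val x) (val y), (val x == u) && F v (val y) | (val y == u) && F (val x) v].

(* (S1,T1,S2,T2)-minimal minor: good, and deleting or contracting any edge
   destroys goodness (terminals keep their identity; contracting an edge so
   that a terminal disappears destroys it automatically). Edges are quantified
   as ordered pairs, so both ways of naming the merged vertex are covered. *)
Definition minimal_minor (V : finType) (E : rel V) (S1 T1 S2 T2 : {set V}) (k : nat)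
    (W : finType) (F : rel W) (h : V -> W) : Prop :=
  good_minor E S1 T1 S2 T2 k F h /\
  forall u v, F u v ->
    ~ good_minor E S1 T1 S2 T2 k (del_edge F u v) h /\
    ((exists2 x, x \in terminals S1 T1 S2 T2 & h x = v) \/
     forall h' : V -> {w : W | w != v},
       (forall x, x \in terminals S1 T1 S2 T2 -> val (h' x) = h x) ->
       ~ @good_minor V E S1 T1 S2 T2 k {w : W | w != v} (@contr_edge W F u v) h').

Definition arc_of (W : finType) (L : seq (seq W)) (x y : W) : Prop :=
  exists2 p, p \in L &
    exists i, [/\ i.+1 < size p, nth x p i = x & nth x p i.+1 = y].

(* colour true = red (edges of R), false = blue (edges of B). *)
Definition colored_arc (W : finType) (R B : seq (seq W)) (c : bool) (x y : W) : Prop :=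
  if c then arc_of R x y else arc_of B x y.

(* x :: s is the vertex sequence of a chain whose first edge has colour c:
   a directed walk in H~ whose edge colours alternate. *)
Fixpoint chain (W : finType) (R B : seq (seq W)) (c : bool) (x : W) (s : seq W) : Prop :=
  match s with
  | [::] => True
  | y :: s' => colored_arc R B c x y /\ chain R B (~~ c) y s'
  end.

(* Main.v *)
Require Import Defs.
From HB Require Import structures.
From mathcomp Require Import all_boot.
From mathcomp Require Import zify.
Set Implicit Arguments. Unset Strict Implicit. Unset Printing Implicit Defensive.

Definition pid (W : eqType) (L : seq (seq W)) (x : W) := find (fun p => x \in p) L.

Lemma lk_disj (W : finType) (F : rel W) S T k L i j x : linkage F S T k L -> i < k -> j < k ->
  x \in nth [::] L i -> x \in nth [::] L j -> i = j.
Proof.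
case=> _ [_ H] ik jk xi xj; apply/eqP; apply/negPn/negP=> nij.
by move: (H i j ik jk nij x xi); rewrite xj.
Qed.

Lemma lk_mem (W : finType) (F : rel W) S T k L p x : linkage F S T k L -> p \in L -> x \in p ->
  pid L x < k /\ nth [::] L (pid L x) = p.
Proof.
move=> HL pL xp; have [sz _] := HL.
have hx : has (fun p => x \in p) L by apply/hasP; exists p.
have pk : pid L x < k by rewrite -sz -has_find.
split=> //; have ip : index p L < k by rewrite -sz index_mem.
have := nth_find [::] hx; rewrite -/(pid L x) => xn.
have : x \in nth [::] L (index p L) by rewrite nth_index.
move/(lk_disj HL ip pk) => /(_ xn) <-. by rewrite nth_index.
Qed.

Lemma lk_nth_in (W : finType) (F : rel W) S T k L i : linkage F S T k L -> i < k ->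
  nth [::] L i \in L.
Proof. by case=> sz _ ik; apply: mem_nth; rewrite sz. Qed.

Lemma lk_pid_nth (W : finType) (F : rel W) S T k L i x : linkage F S T k L -> i < k ->
  x \in nth [::] L i -> pid L x = i.
Proof.
move=> HL ik xi; have [pk e] := lk_mem HL (lk_nth_in HL ik) xi.
apply: (lk_disj HL pk ik _ xi); by rewrite e.
Qed.

Lemma lk_path (W : finType) (F : rel W) S T k L p : linkage F S T k L -> p \in L ->
  [/\ sorted F p, uniq p, (forall x0, head x0 p \in S), (forall x0, last x0 p \in T) & p != [::]].
Proof.
case=> _ [H _] pL; have [x [s [-> ps u xS lT]]] := H p pL; split=> //.
Qed.

Definition Rfw (W : eqType) (L : seq (seq W)) (x y : W) :=
  exists2 p, p \in L & [/\ x \in p, y \in p & index x p < index y p].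
Definition adj (W : eqType) (s : seq W) (x y : W) := exists s1 s2, s = s1 ++ x :: y :: s2.
Definition Bj (W : eqType) (L : seq (seq W)) (x y : W) :=
  exists2 q, q \in L & (adj q x y \/ adj q y x).

Lemma Bj_sym (W : eqType) (L : seq (seq W)) x y : Bj L x y -> Bj L y x.
Proof. by case=> q qL H; exists q => //; case: H; [right|left]. Qed.

Lemma sorted_adj (W : eqType) (r : rel W) s1 s2 x y :
  sorted r (s1 ++ x :: y :: s2) -> r x y.
Proof.
case: s1 => [|a s1] /=; first by case/andP=> ->.
by rewrite cat_path => /andP[_] /= /andP[_ /andP[-> _]].
Qed.

Lemma Rfw_path (W : finType) (F : rel W) S T k L x y p :
  linkage F S T k L -> Rfw L x y -> p \in L -> x \in p -> y \in p /\ index x p < index y p.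
Proof.
move=> HL [q qL [xq yq lt]] pL xp.
have [_ e1] := lk_mem HL pL xp; have [_ e2] := lk_mem HL qL xq.
by move: e1; rewrite e2 => <-; split.
Qed.

Lemma Rfw_trans (W : finType) (F : rel W) S T k L x y z :
  linkage F S T k L -> Rfw L x y -> Rfw L y z -> Rfw L x z.
Proof.
move=> HL Hxy [q qL [yq zq lt]]; have [xq lt2] : x \in q /\ index x q < index y q.
  case: Hxy => p pL [xp yp lt1].
  have [_ e1] := lk_mem HL pL yp; have [_ e2] := lk_mem HL qL yq.
  by move: e1; rewrite e2 => ->; split.
exists q => //; split=> //; exact: ltn_trans lt2 lt.
Qed.

Lemma arc_adj (W : finType) (L : seq (seq W)) x y : arc_of L x y ->
  exists2 p, p \in L & adj p x y.
Proof.
case=> p pL [i [lt ex ey]]; exists p => //; exists (take i p), (drop i.+2 p).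
rewrite -{1}(cat_take_drop i p) (drop_nth x) ?(ltn_trans _ lt) //.
by rewrite (drop_nth x) // ex ey.
Qed.

Lemma arc_Rfw (W : finType) (F : rel W) S T k L x y : linkage F S T k L ->
  arc_of L x y -> Rfw L x y.
Proof.
move=> HL [p pL [i [lt ex ey]]]; have [_ u _ _ _] := lk_path HL pL.
have li : i < size p by exact: ltn_trans lt.
have e1 := index_uniq x li u; have e2 := index_uniq x lt u.
rewrite ex in e1; rewrite ey in e2.
exists p => //; split; first by rewrite -index_mem e1.
  by rewrite -index_mem e2.
by rewrite e1 e2.
Qed.

Lemma arc_Bj (W : finType) (L : seq (seq W)) x y : arc_of L x y -> Bj L x y.
Proof. by case/arc_adj => p pL H; exists p => //; left. Qed.

Lemma two_nbrs (W : eqType) (F : rel W) p z : symmetric F -> sorted F p -> uniq p -> z \in p ->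
  z = head z p \/ z = last z p \/ exists a b, [/\ a != b, F z a & F z b].
Proof.
move=> sF sp up zp; move: sp up; case/splitPr: zp => p1 p2.
case/lastP: p1 => [|p1 a]; first by left.
case: p2 => [|b p2]; first by right; left; rewrite last_cat.
rewrite cat_rcons => sp up; right; right; exists a, b; split.
- apply/eqP=> eab; move: up; rewrite eab cat_uniq => /and3P[_ _] /=.
  by rewrite !inE eqxx orbT.
- by rewrite sF; apply: (sorted_adj (s2 := b :: p2) sp).
- by move: sp; rewrite -cat_rcons; apply: sorted_adj.
Qed.

Lemma term_deg (V W : finType) (E : rel V) (F : rel W) (beta : W -> {set V}) (h : V -> W) x a b :
  minor_model E F beta -> beta (h x) = [set x] -> #|[set y | E x y]| = 1 ->
  F (h x) a -> F (h x) b -> a = b.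
Proof.
case=> _ dis _ real bx c1 Fa Fb; apply/eqP/negPn/negP=> nab.
have [a1 [a2 [a1x a2a Ea]]] := real _ _ Fa; have [b1 [b2 [b1x b2b Eb]]] := real _ _ Fb.
move: a1x b1x; rewrite bx !inE => /eqP ea /eqP eb; subst a1 b1.
have /cards1P [y0 ey] : #|[set y | E x y]| == 1 by rewrite c1.
have : a2 \in [set y | E x y] by rewrite inE.
have : b2 \in [set y | E x y] by rewrite inE.
rewrite ey !inE => /eqP e1 /eqP e2; subst a2 b2.
by move: (dis _ _ nab) => /disjointFr /(_ a2a); rewrite b2b.
Qed.

Lemma h_inj (V W : finType) (beta : W -> {set V}) (h : V -> W) (D : {set V}) x y :
  (forall x, x \in D -> beta (h x) = [set x]) -> x \in D -> y \in D -> h x = h y -> x = y.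
Proof. by move=> H xD yD e; apply: set1_inj; rewrite -H // -H // e. Qed.

Lemma end_term (V W : finType) (F : rel W) (beta : W -> {set V}) (h : V -> W)
   (D S T : {set V}) k L p x :
  (forall x, x \in D -> beta (h x) = [set x]) -> S \subset D -> T \subset D ->
  linkage F (h @: S) (h @: T) k L -> p \in L -> x \in D ->
  symmetric F -> (forall a b, F (h x) a -> F (h x) b -> a = b) -> h x \in p ->
  x \in S :|: T.
Proof.
move=> H sS sT HL pL xD sF deg xp; have [sp up hS lT _] := lk_path HL pL.
case: (two_nbrs sF sp up xp) => [e|[e|[a [b [nab Fa Fb]]]]].
- have /imsetP [y yS ey] := hS (h x); rewrite -e in ey.
  by rewrite (h_inj H xD (subsetP sS _ yS) ey) inE yS.
- have /imsetP [y yT ey] := lT (h x); rewrite -e in ey.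
  by rewrite (h_inj H xD (subsetP sT _ yT) ey) inE yT orbT.
- by move: nab; rewrite (deg _ _ Fa Fb) eqxx.
Qed.


Definition cF (W : eqType) (F : rel W) u v : rel W := fun a b =>
  (a != b) && [|| F a b, (a == u) && F v b | (b == u) && F a v].

Lemma map_val_pmap (W : finType) (v : W) (s : seq W) :
  map val (pmap (insub : W -> option {w : W | w != v}) s) = filter (fun w => w != v) s.
Proof.
elim: s => //= a s IH; case: (boolP (a != v)) => av.
  by rewrite (insubT (fun w => w != v) av) /= IH.
by rewrite (insubF {w : W | w != v} (negbTE av)) /= IH.
Qed.

Lemma sorted_cat_cons (W : eqType) (r : rel W) s x t :
  sorted r (s ++ x :: t) = sorted r (rcons s x) && path r x t.
Proof.
case: s => [|a s] //=; by rewrite cat_path rcons_path /= andbA.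
Qed.

Lemma uniq_mid (W : eqType) (s1 s2 : seq W) x : uniq (s1 ++ x :: s2) -> x \notin s1 /\ x \notin s2.
Proof.
rewrite cat_uniq /= => /and3P[_ H /andP[xs2 _]]; split=> //.
by apply/negP=> xs1; case/negP: H; rewrite xs1.
Qed.

Lemma uniq_mid2 (W : eqType) (s1 s2 : seq W) x y : uniq (s1 ++ x :: y :: s2) ->
  [/\ x \notin s1, x \notin s2, y \notin s1 & y \notin s2].
Proof.
move=> u; have [xs1 xs2] := uniq_mid u; move: u; rewrite -cat_rcons => /uniq_mid[ys1 ys2].
move: xs2 ys1; rewrite inE negb_or mem_rcons inE negb_or => /andP[_ ->] /andP[_ ->].
by rewrite xs1 ys2.
Qed.

Lemma filter_id_notin (W : eqType) (s : seq W) v : v \notin s -> filter (fun w => w != v) s = s.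
Proof. by move=> vs; apply/all_filterP/allP=> w ws; apply/negP=> /eqP ew; subst w; rewrite ws in vs. Qed.

Lemma sorted_rcons2 (W : eqType) (r : rel W) s a x :
  sorted r (rcons (rcons s a) x) = sorted r (rcons s a) && r a x.
Proof.
case: s => [|b s] /=; first by rewrite andbT.
by rewrite rcons_path last_rcons.
Qed.

Lemma sorted_cF (W : eqType) (F : rel W) u v p : irreflexive F -> sorted F p -> uniq p ->
  u != v -> [\/ v \notin p, adj p u v | adj p v u] ->
  sorted (cF F u v) (filter (fun w => w != v) p).
Proof.
move=> irr sp up nuv; have sub : subrel F (cF F u v).
  move=> a b Fab; rewrite /cF Fab andbT; apply/negP=> /eqP e; subst b.
  by rewrite irr in Fab.
case=> [vp|[s1 [s2 e]]|[s1 [s2 e]]].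
- rewrite filter_id_notin //; exact: sub_sorted sp.
- subst p; have [us1 us2 vs1 vs2] := uniq_mid2 up.
  rewrite filter_cat /= eqxx (negbTE nuv) /= !filter_id_notin //.
  move: sp; rewrite sorted_cat_cons => /andP[sp1] /= /andP[_].
  rewrite sorted_cat_cons (sub_sorted sub sp1) /=; clear up; case: s2 us2 vs2 => [|b s2] //= ub _ /andP[Fvb pb].
  rewrite (sub_path sub pb) andbT /cF eqxx Fvb orbT andbT.
  by apply/negP=> /eqP eub; subst b; rewrite inE eqxx in ub.
- subst p; have [vs1 vs2 us1 us2] := uniq_mid2 up.
  rewrite filter_cat /= eqxx nuv /= !filter_id_notin //.
  move: sp; rewrite sorted_cat_cons => /andP[sp1] /= /andP[Fvu pu].
  rewrite sorted_cat_cons (sub_path sub pu) andbT.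
  clear up; case/lastP: s1 sp1 us1 {vs1} => [|s1 a] //.
  rewrite !sorted_rcons2 => /andP[ps Fav] ua; rewrite (sub_sorted sub ps) /cF Fav eqxx !orbT andbT.
  by apply/negP=> /eqP eau; subst a; rewrite mem_rcons inE eqxx in ua.
Qed.

Lemma last_filter (W : eqType) (P : pred W) a s : P a -> P (last a s) -> last a (filter P s) = last a s.
Proof.
move=> Pa; case/lastP: s => [|s b] //; rewrite last_rcons filter_rcons => Pb.
by rewrite Pb last_rcons.
Qed.

Lemma lk_contr (V W : finType) (F : rel W) (h : V -> W) (S T : {set V}) k L u v (huv : u != v) :
  irreflexive F -> linkage F (h @: S) (h @: T) k L ->
  (forall x, x \in S :|: T -> h x != v) ->
  (forall p, p \in L -> [\/ v \notin p, adj p u v | adj p v u]) ->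
  linkage (@contr_edge W F u v)
    ((fun x => insubd (exist (fun w => w != v) u huv) (h x)) @: S)
    ((fun x => insubd (exist (fun w => w != v) u huv) (h x)) @: T) k
    (map (pmap (insub : W -> option {w : W | w != v})) L).
Proof.
move=> irr HL hv Hadj; have [sz [Hp Hd]] := HL.
have ce : @contr_edge W F u v = relpre val (cF F u v) by [].
split; first by rewrite size_map.
split.
- move=> p' /mapP [p pL ->]; have [a [s [ep ps up aS lT]]] := Hp p pL.
  have /imsetP [y yS ey] := aS; have av : a != v by rewrite ey hv // inE yS.
  have /imsetP [z zT ez] := lT; have lv : last a s != v by rewrite ez hv // inE zT orbT.
  have srt : sorted (@contr_edge W F u v) (pmap insub p).
    have := Hadj p pL; rewrite ce -sorted_map map_val_pmap ep => Ha.
    by apply: sorted_cF => //; rewrite -ep.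
  rewrite ep /= (insubT (fun w => w != v) av) /=.
  exists (Sub a av), (pmap insub s); split => //.
  + by move: srt; rewrite ep /= (insubT (fun w => w != v) av).
  + by move: (pmap_sub_uniq {w : W | w != v} up); rewrite ep /= (insubT (fun w => w != v) av).
  + apply/imsetP; exists y => //; apply: val_inj; by rewrite val_insubd /= -ey av.
  + apply/imsetP; exists z => //; apply: val_inj; rewrite val_insubd -ez lv.
    rewrite -(last_map val) /= map_val_pmap last_filter //.
- move=> i j ik jk nij x xi; rewrite (nth_map [::]) ?sz // mem_pmap_sub.
  move: xi; rewrite (nth_map [::]) ?sz // mem_pmap_sub => xi.
  exact: Hd ik jk nij _ xi.
Qed.

Lemma disjP (V : finType) (A B : {set V}) : (forall x, x \in A -> x \in B -> False) -> [disjoint A & B].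
Proof. by move=> H; rewrite disjoint_subset; apply/subsetP=> x xA; rewrite inE; apply/negP=> /(H x xA). Qed.

Lemma connect_mono (V : finType) (E : rel V) (A B : {set V}) a b : A \subset B ->
  connect (fun x y => [&& E x y, x \in A & y \in A]) a b ->
  connect (fun x y => [&& E x y, x \in B & y \in B]) a b.
Proof.
move=> /subsetP sAB; apply: connect_sub => x y /and3P[Exy xA yA].
by apply: connect1; rewrite Exy !sAB.
Qed.

Definition bcontr (V W : finType) (beta : W -> {set V}) (u v : W) (w : {w : W | w != v}) : {set V} :=
  beta (val w) :|: (if val w == u then beta v else set0).
Arguments bcontr {V W} beta u v w.

Lemma mm_contr (V W : finType) (E : rel V) (F : rel W) (beta : W -> {set V}) u v :
  symmetric E -> minor_model E F beta -> F u v -> u != v ->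
  minor_model E (@contr_edge W F u v) (bcontr beta u v).
Proof.
move=> sE [ne dis con real] Fuv nuv; rewrite /bcontr; split.
- move=> w; apply/set0Pn; have /set0Pn [x xb] := ne (val w); exists x; by rewrite inE xb.
- move=> w w' nww; have nv : val w != val w' by apply: contraNneq nww => /val_inj ->.
  have vw : val w != v := valP w; have vw' : val w' != v := valP w'.
  have mb : forall z (w0 : {w : W | w != v}), (z \in beta (val w0) :|: (if val w0 == u then beta v else set0))
     = (z \in beta (val w0)) || ((val w0 == u) && (z \in beta v)).
    by move=> z w0; case: ifP; rewrite !inE ?andbT ?andbF ?orbF.
  apply: disjP => x; rewrite !mb => /orP[xw|/andP[/eqP wu xv]] /orP[xw'|/andP[/eqP w'u xv']].
  + by rewrite (disjointFr (dis _ _ nv) xw) in xw'.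
  + by rewrite (disjointFr (dis _ _ vw) xw) in xv'.
  + by rewrite (disjointFr (dis _ _ vw') xw') in xv.
  + by move: nv; rewrite wu w'u eqxx.
- move=> w a b; case: (eqVneq (val w) u) => [wu|nwu]; last first.
    rewrite ?setU0 => ab bb; exact: con.
  rewrite wu.
  have [a0 [b0 [a0u b0v Eab]]] := real _ _ Fuv.
  have sU : beta u \subset beta u :|: beta v by rewrite subsetUl.
  have sV : beta v \subset beta u :|: beta v by rewrite subsetUr.
  have ca0b0 : connect (fun x y => [&& E x y, x \in beta u :|: beta v & y \in beta u :|: beta v]) a0 b0.
    by apply: connect1; rewrite Eab (subsetP sU _ a0u) (subsetP sV _ b0v).
  have cb0a0 : connect (fun x y => [&& E x y, x \in beta u :|: beta v & y \in beta u :|: beta v]) b0 a0.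
    by apply: connect1; rewrite sE Eab (subsetP sU _ a0u) (subsetP sV _ b0v).
  rewrite !inE => /orP[au|av] /orP[bu|bv].
  + exact: connect_mono sU (con _ _ _ au bu).
  + apply: connect_trans (connect_mono sU (con _ _ _ au a0u)) _.
    exact: connect_trans ca0b0 (connect_mono sV (con _ _ _ b0v bv)).
  + apply: connect_trans (connect_mono sV (con _ _ _ av b0v)) _.
    exact: connect_trans cb0a0 (connect_mono sU (con _ _ _ a0u bu)).
  + exact: connect_mono sV (con _ _ _ av bv).
- move=> w w' /andP[_ /or3P[Fww|/andP[/eqP wu Fv]|/andP[/eqP w'u Fv]]].
  + have [a [b [ab bb Eab]]] := real _ _ Fww; exists a, b; by rewrite !inE ab bb.
  + have [a [b [ab bb Eab]]] := real _ _ Fv; exists a, b; by rewrite wu eqxx !inE ab bb orbT.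
  + have [a [b [ab bb Eab]]] := real _ _ Fv; exists a, b; by rewrite w'u eqxx !inE ab bb orbT.
Qed.

Lemma adj_mem (W : eqType) (p : seq W) u v : adj p u v -> u \in p /\ v \in p.
Proof. by case=> s1 [s2 ->]; rewrite !mem_cat !inE !eqxx !orbT. Qed.

Lemma adj_F (W : finType) (F : rel W) S T k L p u v : symmetric F -> linkage F S T k L -> p \in L ->
  adj p u v \/ adj p v u -> F u v.
Proof.
move=> sF HL pL; have [sp _ _ _ _] := lk_path HL pL.
case=> [[s1 [s2 e]]|[s1 [s2 e]]]; subst p; first exact: sorted_adj sp.
rewrite sF; exact: sorted_adj sp.
Qed.

Lemma adj_all (W : finType) (F : rel W) S T k L p u v : linkage F S T k L -> p \in L ->
  adj p u v \/ adj p v u -> forall q, q \in L -> [\/ v \notin q, adj q u v | adj q v u].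
Proof.
move=> HL pL Ha q qL; case: (boolP (v \in q)) => vq; last exact: Or31.
have vp : v \in p by case: Ha => /adj_mem [].
have [_ e1] := lk_mem HL pL vp; have [_ e2] := lk_mem HL qL vq.
have epq : p = q by rewrite -e1 -e2.
rewrite -epq; case: Ha => H; [exact: Or32|exact: Or33].
Qed.

Lemma contr_contra (V : finType) (E : rel V) S1 T1 S2 T2 k (W : finType) (F : rel W) (h : V -> W) R B u v :
  simple_graph E -> simple_graph F -> minimal_minor E S1 T1 S2 T2 k F h ->
  (forall x, x \in terminals S1 T1 S2 T2 -> h x != u /\ h x != v) ->
  linkage F (h @: S1) (h @: T1) k R -> linkage F (h @: S2) (h @: T2) k B ->
  (exists2 p, p \in R & adj p u v \/ adj p v u) ->
  (exists2 q, q \in B & adj q u v \/ adj q v u) -> False.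
Proof.
move=> [sE iE] [sF iF] [[beta [mm bt _ _]] Hmin] ht HR HB [p pR Hp] [q qB Hq].
have Fuv := adj_F sF HR pR Hp.
have huv : u != v by apply/negP=> /eqP e; subst v; rewrite iF in Fuv.
have [_ [[x xt hx]|Hc]] := Hmin u v Fuv.
  by have [_] := ht x xt; rewrite hx eqxx.
pose h' := fun x => insubd (exist (fun w => w != v) u huv) (h x).
have vh' : forall x, x \in terminals S1 T1 S2 T2 -> val (h' x) = h x.
  by move=> x xt; rewrite val_insubd; have [_ ->] := ht x xt.
apply: (Hc h' vh'); exists (bcontr beta u v); split.
- exact: mm_contr.
- move=> x xt; rewrite /bcontr vh' //; have [/negbTE -> _] := ht x xt.
  by rewrite setU0 bt.
- exists (map (pmap (insub : W -> option {w : W | w != v})) R); apply: lk_contr => //.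
  + move=> x xS; have xt : x \in terminals S1 T1 S2 T2.
      by move: xS; rewrite /terminals !inE => /orP[]->; rewrite ?orbT.
    by have [_ ->] := ht x xt.
  + exact: adj_all HR pR Hp.
- exists (map (pmap (insub : W -> option {w : W | w != v})) B); apply: lk_contr => //.
  + move=> x xS; have xt : x \in terminals S1 T1 S2 T2.
      by move: xS; rewrite /terminals !inE => /orP[]->; rewrite ?orbT.
    by have [_ ->] := ht x xt.
  + exact: adj_all HB qB Hq.
Qed.

Record ctx (V : finType) (E : rel V) (S1 T1 S2 T2 : {set V}) (k : nat) (W : finType) (F : rel W)
   (h : V -> W) (R B : seq (seq W)) : Prop := Ctx {
  c_sE : simple_graph E;
  c_d1 : [disjoint S1 & T1]; c_d2 : [disjoint S1 & S2]; c_d3 : [disjoint S1 & T2];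
  c_d4 : [disjoint T1 & S2]; c_d5 : [disjoint T1 & T2]; c_d6 : [disjoint S2 & T2];
  c_deg : forall x, x \in terminals S1 T1 S2 T2 -> #|[set y | E x y]| = 1;
  c_sF : simple_graph F;
  c_min : minimal_minor E S1 T1 S2 T2 k F h;
  c_R : linkage F (h @: S1) (h @: T1) k R;
  c_B : linkage F (h @: S2) (h @: T2) k B }.

Lemma not_term V E S1 T1 S2 T2 k W F h R B u p q :
  @ctx V E S1 T1 S2 T2 k W F h R B -> p \in R -> u \in p -> q \in B -> u \in q ->
  forall x, x \in terminals S1 T1 S2 T2 -> h x != u.
Proof.
move=> C pR up qB uq x xt; apply/negP=> /eqP hx; subst u.
have [[beta [mm bt _ _]] _] := c_min C.
have deg : forall a b, F (h x) a -> F (h x) b -> a = b.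
  by move=> a b; apply: term_deg mm (bt x xt) (c_deg C xt).
have sT1 : S1 \subset terminals S1 T1 S2 T2 by apply/subsetP=> y; rewrite /terminals !inE => ->.
have sT2 : T1 \subset terminals S1 T1 S2 T2 by apply/subsetP=> y; rewrite /terminals !inE => ->; rewrite ?orbT.
have sT3 : S2 \subset terminals S1 T1 S2 T2 by apply/subsetP=> y; rewrite /terminals !inE => ->; rewrite ?orbT.
have sT4 : T2 \subset terminals S1 T1 S2 T2 by apply/subsetP=> y; rewrite /terminals !inE => ->; rewrite ?orbT.
have := end_term bt sT1 sT2 (c_R C) pR xt (c_sF C).1 deg up.
have := end_term bt sT3 sT4 (c_B C) qB xt (c_sF C).1 deg uq.
rewrite !inE => /orP[xa|xa] /orP[xb|xb].
- by rewrite (disjointFr (c_d2 C) xb) in xa.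
- by rewrite (disjointFr (c_d4 C) xb) in xa.
- by rewrite (disjointFr (c_d3 C) xb) in xa.
- by rewrite (disjointFr (c_d5 C) xb) in xa.
Qed.

Lemma shared_contra V E S1 T1 S2 T2 k W F h R B u v :
  @ctx V E S1 T1 S2 T2 k W F h R B ->
  (exists2 p, p \in R & adj p u v \/ adj p v u) ->
  (exists2 q, q \in B & adj q u v \/ adj q v u) -> False.
Proof.
move=> C [p pR Hp] [q qB Hq].
have mp : u \in p /\ v \in p by case: Hp => /adj_mem [] -> ->.
have mq : u \in q /\ v \in q by case: Hq => /adj_mem [] -> ->.
have Ht : forall x, x \in terminals S1 T1 S2 T2 -> h x != u /\ h x != v.
  move=> x xt; split.
  - exact: (not_term C pR mp.1 qB mq.1).
  - exact: (not_term C pR mp.2 qB mq.2).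
apply: (contr_contra (c_sE C) (c_sF C) (c_min C) Ht (c_R C) (c_B C)).
- by exists p.
- by exists q.
Qed.

Lemma sorted_del_notin (W : finType) (F : rel W) u v s : sorted F s -> (u \notin s) || (v \notin s) ->
  sorted (del_edge F u v) s.
Proof.
case: s => [|a s] //=; elim: s a => [|b s IH] a //= /andP[Fab ps] H.
have H' : (u \notin b :: s) || (v \notin b :: s).
  by move: H; rewrite !(inE, negb_or) => /orP[/andP[_ ->]|/andP[_ ->]]; rewrite ?orbT.
rewrite (IH b ps H') andbT /del_edge Fab /=; rewrite !(inE, negb_or) in H; move: H.
by case/orP=> /andP[na /andP[nb _]]; apply/negP=> /orP[/andP[/eqP ea /eqP eb]|/andP[/eqP ea /eqP eb]];
  subst; rewrite ?eqxx in na nb.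
Qed.

Lemma sorted_del_noadj (W : finType) (F : rel W) u v s : sorted F s -> ~ adj s u v -> ~ adj s v u ->
  sorted (del_edge F u v) s.
Proof.
case: s => [|a s] //=; elim: s a => [|b s IH] a //= /andP[Fab ps] H1 H2.
have H1' : ~ adj (b :: s) u v by case=> s1 [s2 e]; apply: H1; exists (a :: s1), s2; rewrite e.
have H2' : ~ adj (b :: s) v u by case=> s1 [s2 e]; apply: H2; exists (a :: s1), s2; rewrite e.
rewrite (IH b ps H1' H2') andbT /del_edge Fab /=.
apply/negP=> /orP[/andP[/eqP ea /eqP eb]|/andP[/eqP ea /eqP eb]]; subst.
- by apply: H1; exists [::], s.
- by apply: H2; exists [::], s.
Qed.

Lemma lk_del (W : finType) (F : rel W) S T k L u v : linkage F S T k L ->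
  (forall q, q \in L -> sorted (del_edge F u v) q) -> linkage (del_edge F u v) S T k L.
Proof.
move=> [sz [Hp Hd]] Hs; split=> //; split=> // p pL.
have [x [s [e ps up xS lT]]] := Hp p pL; exists x, s; split=> //.
by have := Hs p pL; rewrite e.
Qed.

Lemma del_contra V E S1 T1 S2 T2 k W F h R B R' B' u v :
  @ctx V E S1 T1 S2 T2 k W F h R B -> F u v ->
  linkage (del_edge F u v) (h @: S1) (h @: T1) k R' ->
  linkage (del_edge F u v) (h @: S2) (h @: T2) k B' -> False.
Proof.
move=> C Fuv HR HB; have [[beta [[ne dis con real] bt _ _]] Hmin] := c_min C.
have [Hd _] := Hmin u v Fuv; apply: Hd; exists beta; split => //.
- split=> // w w' /andP[Fww _]; exact: real.
- by exists R'.
- by exists B'.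
Qed.


Definition adjb (W : eqType) (s : seq W) x y := (x, y) \in zip s (behead s).

Lemma adjP (W : eqType) (s : seq W) x y : reflect (adj s x y) (adjb s x y).
Proof.
rewrite /adjb; elim: s => [|a s IH] /=.
  by constructor=> [[[|? ?] [? ?]]].
case: s IH => [|b s] IH /=.
  by constructor=> [[[|? [|? ?]] [? ?]]].
rewrite inE; apply: (iffP orP) => [[/eqP [-> ->]|/IH [s1 [s2 e]]]|[s1 [s2 e]]].
- by exists [::], s.
- by exists (a :: s1), s2; rewrite e.
- case: s1 e => [|a' s1] /=; first by case=> -> -> _; left.
  by case=> _ e; right; apply/IH; exists s1, s2.
Qed.

Definition Bjb (W : eqType) (L : seq (seq W)) x y := has (fun q => adjb q x y || adjb q y x) L.

Lemma BjP (W : eqType) (L : seq (seq W)) x y : reflect (Bj L x y) (Bjb L x y).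
Proof.
apply: (iffP hasP) => [[q qL /orP[/adjP H|/adjP H]]|[q qL [/adjP H|/adjP H]]].
- by exists q => //; left. - by exists q => //; right.
- by exists q => //; rewrite H. - by exists q => //; rewrite H orbT.
Qed.

Definition J (W : eqType) (L : seq (seq W)) (p q : W * W) := Bjb L p.2 q.1.

Definition bad (W : eqType) (L1 L2 : seq (seq W)) (c : seq (W * W)) :=
  [/\ c != [::], (forall ab, ab \in c -> Rfw L1 ab.1 ab.2) & cycle (J L2) c].

Lemma pathJ_head (W : eqType) (L : seq (seq W)) p p' s : p.2 = p'.2 -> path (J L) p s = path (J L) p' s.
Proof. by case: s => //= q s; rewrite /J => ->. Qed.

Lemma pathJ_rcons (W : eqType) (L : seq (seq W)) p s z z' : z.1 = z'.1 ->
  path (J L) p (rcons s z) = path (J L) p (rcons s z').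
Proof. by move=> e; rewrite !rcons_path /J e. Qed.

Lemma nuniq_split (T1 T2 : eqType) (f : T1 -> T2) (c : seq T1) : ~~ uniq (map f c) ->
  exists A x B y C, c = A ++ x :: B ++ y :: C /\ f x = f y.
Proof.
elim: c => [|z c IH] //=; rewrite negb_and negbK => /orP[/mapP [y yc fz]|nu].
- case/splitPr: yc => B C; by exists [::], z, B, y, C.
- have [A [x [B [y [C [e fe]]]]]] := IH nu; exists (z :: A), x, B, y, C; by rewrite e.
Qed.

Lemma Rfw_pid (W : finType) (F : rel W) S T k L a b : linkage F S T k L -> Rfw L a b ->
  [/\ pid L a < k, a \in nth [::] L (pid L a), b \in nth [::] L (pid L a),
      index a (nth [::] L (pid L a)) < index b (nth [::] L (pid L a)) & pid L b = pid L a].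
Proof.
move=> HL [p pL [ap bp lt]]; have [ak ea] := lk_mem HL pL ap.
have bq : b \in nth [::] L (pid L a) by rewrite ea.
by rewrite (lk_pid_nth HL ak bq) ea.
Qed.

Lemma shortcut (W : finType) (F : rel W) S T k L1 L2 c : linkage F S T k L1 -> bad L1 L2 c ->
  ~~ uniq (map (fun ab => pid L1 ab.1) c) -> exists c', bad L1 L2 c' /\ size c' < size c.
Proof.
move=> HL [_ Hr Hc] /nuniq_split [A [x [B [y [C [ec fe]]]]]].
have Hr' : forall ab, ab \in x :: B ++ y :: C ++ A -> Rfw L1 ab.1 ab.2.
  by move=> ab abin; apply: Hr; rewrite ec -(mem_rot (size A)) rot_size_cat cat_cons -catA.
have Hc' : cycle (J L2) (x :: B ++ y :: C ++ A).
  have -> : x :: B ++ y :: C ++ A = rot (size A) c by rewrite ec rot_size_cat cat_cons -catA.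
  by rewrite rot_cycle.
move: Hc'; rewrite /= rcons_cat cat_path => /andP[pB] /= /andP[Jy pD].
have [xk ax bx ltx ebx] := Rfw_pid HL (Hr' x (mem_head _ _)).
have yin : y \in x :: B ++ y :: C ++ A by rewrite inE mem_cat inE eqxx !orbT.
have [yk ay byy lty eby] := Rfw_pid HL (Hr' y yin).
rewrite fe in ax bx ltx.
case: (ltnP (index x.1 (nth [::] L1 (pid L1 y.1))) (index y.2 (nth [::] L1 (pid L1 y.1)))) => hlt.
- exists ((x.1, y.2) :: C ++ A); split; last by rewrite ec !size_cat /= !size_cat /=; lia.
  split=> //.
  + move=> ab; rewrite inE => /orP[/eqP -> /=|abin]; last by apply: Hr'; move: abin; rewrite !(inE, mem_cat) => /orP[]->; rewrite !orbT.
    exists (nth [::] L1 (pid L1 y.1)); first exact: lk_nth_in HL yk.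
    by split.
  + rewrite /= (@pathJ_head W L2 (x.1, y.2) y _ erefl).
    by rewrite (@pathJ_rcons W L2 y (C ++ A) (x.1, y.2) x erefl).
- exists ((y.1, x.2) :: B); split; last by rewrite ec !size_cat /= !size_cat /=; lia.
  split=> //.
  + move=> ab; rewrite inE => /orP[/eqP -> /=|abin]; last by apply: Hr'; rewrite !(inE, mem_cat) abin !orbT.
    exists (nth [::] L1 (pid L1 y.1)); first exact: lk_nth_in HL yk.
    by split=> //; exact: (ltn_trans lty (leq_ltn_trans hlt ltx)).
  + rewrite /= (@pathJ_head W L2 (y.1, x.2) x _ erefl).
    by rewrite (@pathJ_rcons W L2 x B (y.1, x.2) y erefl) rcons_path pB.
Qed.


Lemma modS_eq t n : t < n -> t.+1 %% n = if t.+1 == n then 0 else t.+1.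
Proof.
move=> tn; case: eqP => [->|ne]; first by rewrite modnn.
by rewrite modn_small //; lia.
Qed.

Lemma cycle_nth (T : Type) (e : rel T) (x0 : T) c : cycle e c ->
  forall t, t < size c -> e (nth x0 c t) (nth x0 c (t.+1 %% size c)).
Proof.
case: c => [|x s] //= /(pathP x0) H t lt.
have := H t; rewrite size_rcons => /(_ lt); rewrite modS_eq //.
case: t lt => [|t] lt /=.
- rewrite nth_rcons; case: s {H} lt => [|y s] //= _.
- have ts : t < size s by lia.
  rewrite !nth_rcons ts; case: (ltnP t.+1 (size s)) => h1.
  + by rewrite (_ : (t.+2 == (size s).+1) = false) //; lia.
  + have e1 : t.+1 = size s by lia.
    by rewrite e1 !eqxx.
Qed.

Lemma in_take_le (W : eqType) (s : seq W) m x : x \in take m.+1 s -> x \in s /\ index x s <= m.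
Proof. by move=> xt; have xs := mem_take xt; split=> //; move: xt; rewrite in_take. Qed.

Lemma in_drop_ge (W : eqType) (s : seq W) m x : uniq s -> x \in drop m s -> x \in s /\ m <= index x s.
Proof.
move=> us xd; have xs := mem_drop xd; split=> //; rewrite leqNgt; apply/negP=> lt.
have xt : x \in take m s by rewrite in_take.
move: us; rewrite -(cat_take_drop m s) cat_uniq => /and3P[_ /hasPn H _].
by move: (H x xd); rewrite xt.
Qed.

Lemma splice (W : eqType) (r : rel W) (x0 : W) (Q P : seq W) m ib :
  m < size Q -> ib < size P -> sorted r (take m.+1 Q) -> sorted r (drop ib P) ->
  r (nth x0 Q m) (nth x0 P ib) -> sorted r (take m.+1 Q ++ drop ib P).
Proof.
move=> mQ iP sT sD rj; move: sT sD; rewrite (take_nth x0 mQ) (drop_nth x0 iP).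
by rewrite sorted_cat_cons sorted_rcons2 rj andbT => -> /= ->.
Qed.

Lemma last_indep (W : eqType) (s : seq W) x y : s != [::] -> last x s = last y s.
Proof. by case: s. Qed.

Lemma lkpath_of (W : finType) (F : rel W) (S T : {set W}) (p : seq W) : p != [::] -> sorted F p -> uniq p ->
  (forall x0, head x0 p \in S) -> (forall x0, last x0 p \in T) ->
  exists x s, [/\ p = x :: s, path F x s, uniq p, x \in S & last x s \in T].
Proof. by case: p => // x s _ ps up hS lT; exists x, s; split=> //; [exact: hS x | exact: lT x]. Qed.

Lemma reroute (W : finType) (F : rel W) Sa Ta Sb Tb k L1 L2 c :
  symmetric F -> linkage F Sa Ta k L1 -> linkage F Sb Tb k L2 ->
  bad L1 L2 c -> uniq (map (fun ab => pid L1 ab.1) c) ->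
  (forall L1' u v, F u v -> linkage (del_edge F u v) Sa Ta k L1' ->
      (forall q, q \in L2 -> sorted (del_edge F u v) q) -> False) ->
  (forall u v, (exists2 p, p \in L1 & adj p u v \/ adj p v u) -> Bj L2 u v -> False) ->
  False.
Proof.
move=> sF HL1 HL2 [cne Hr Hc] Hu Hdel Hsh.
have [d _] : exists d : W * W, d \in c by case: c cne {Hr Hc Hu} => // x s _; exists x; rewrite mem_head.
pose n := size c.
have n0 : 0 < n by rewrite /n lt0n size_eq0.
pose a t := (nth d c t).1.
pose b t := (nth d c t).2.
pose nx t := t.+1 %% n.
pose pf t := pid L1 (a t).
pose P i := nth [::] L1 i.
have F1 : forall t, t < n -> [/\ pf t < k, a t \in P (pf t), b t \in P (pf t),
   index (a t) (P (pf t)) < index (b t) (P (pf t)) & pid L1 (b t) = pf t].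
  by move=> t tn; exact: Rfw_pid HL1 (Hr _ (mem_nth d tn)).
have F2 : forall t t', t < n -> t' < n -> pf t = pf t' -> t = t'.
  move=> t t' tn tn' e; apply/eqP; rewrite -(nth_uniq 0 _ _ Hu) ?size_map //.
  by rewrite !(nth_map d) // -/(a t) -/(a t') -/(pf t) e.
have Fn : forall t, t < n -> nx t < n by move=> t _; rewrite /nx ltn_pmod.
have Fnx : forall t t', t < n -> t' < n -> nx t = nx t' -> t = t'.
  move=> t t' tn tn'; rewrite /nx !modS_eq //; case: eqP; case: eqP; lia.
have FJ : forall t, t < n -> Bjb L2 (b t) (a (nx t)).
  by move=> t tn; have := cycle_nth d Hc tn.
have TD : forall t t' i x, t < n -> t' < n -> pf t' = i ->
   x \in P (pf t) -> index x (P (pf t)) <= index (a t) (P (pf t)) ->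
   x \in P i -> index (b t') (P i) <= index x (P i) -> False.
  move=> t t' i x tn tn' ei x1 i1 x2 i2; subst i.
  have [k1 _ _ _ _] := F1 t tn; have [k2 _ _ lt2 _] := F1 t' tn'.
  have e := lk_disj HL1 k1 k2 x1 x2; have ett := F2 _ _ tn tn' e; subst t'.
  by move: (leq_trans i2 i1); rewrite leqNgt lt2.
pose sg i := find (fun ab => pid L1 ab.1 == i) c.
have Fsg1 : forall i, sg i < n -> pf (sg i) = i.
  move=> i lt; have h : has (fun ab => pid L1 ab.1 == i) c by rewrite has_find.
  by have /eqP := nth_find d h.
have Fsg2 : forall i t, t < n -> pf t = i -> sg i = t.
  move=> i t tn e; have lt : sg i < n.
    rewrite /n -has_find; apply/hasP; exists (nth d c t); [exact: mem_nth | by apply/eqP].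
  by apply: F2 => //; rewrite Fsg1.
pose newp i := if sg i < n then take (index (a (nx (sg i))) (P (pf (nx (sg i))))).+1 (P (pf (nx (sg i))))
                  ++ drop (index (b (sg i)) (P i)) (P i) else P i.
have Mem : forall i x, i < k -> x \in newp i ->
  (sg i < n /\ ((x \in P (pf (nx (sg i))) /\ index x (P (pf (nx (sg i)))) <= index (a (nx (sg i))) (P (pf (nx (sg i)))))
              \/ (x \in P i /\ index (b (sg i)) (P i) <= index x (P i))))
  \/ (n <= sg i /\ x \in P i).
  move=> i x ik; rewrite /newp; case: ltnP => h; last by right.
  rewrite mem_cat => /orP[xt|xd]; left; split=> //.
  - left; exact: in_take_le xt.
  - right; apply: in_drop_ge xd; by have [_ up _ _ _] := lk_path HL1 (lk_nth_in HL1 ik).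
pose L1' := map newp (iota 0 k).
have nthL : forall i, i < k -> nth [::] L1' i = newp i.
  by move=> i ik; rewrite /L1' (nth_map 0) ?size_iota // nth_iota.
have Bjs : forall x y, Bjb L2 x y -> Bjb L2 y x.
  by move=> x y /BjP /Bj_sym /BjP.
have Fj : forall s, s < n -> F (a (nx s)) (b s).
  move=> s sn; have /BjP [q qB Hq] := FJ s sn.
  by rewrite sF; apply: adj_F sF HL2 qB Hq.
have HL' : linkage F Sa Ta k L1'.
  split; first by rewrite size_map size_iota.
  split.
  - move=> p /mapP [i]; rewrite mem_iota add0n => /andP[_ ik] ->.
    have Pin := lk_nth_in HL1 ik; have [sP uP hP lP neP] := lk_path HL1 Pin.
    rewrite /newp; case: ltnP => h; last by apply: lkpath_of.
    have [k1 a1 _ _ _] := F1 _ (Fn _ h).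
    have [_ _ b2 _ _] := F1 _ h; rewrite Fsg1 // in b2.
    have Qin := lk_nth_in HL1 k1; have [sQ uQ hQ lQ neQ] := lk_path HL1 Qin.
    have mQ : index (a (nx (sg i))) (P (pf (nx (sg i)))) < size (P (pf (nx (sg i))))
      by rewrite index_mem.
    have iP : index (b (sg i)) (P i) < size (P i) by rewrite index_mem.
    apply: lkpath_of.
    + apply/eqP=> e; move: (f_equal size e); by rewrite size_cat (take_nth (a 0) mQ) size_rcons.
    + apply: (@splice _ F (a 0) _ _ _ _ mQ iP); [exact: take_sorted | exact: drop_sorted |].
      by rewrite !nth_index //; apply: Fj.
    + rewrite cat_uniq take_uniq // drop_uniq // andbT; apply/hasPn => x xd; apply/negP => xt.
      have [x1 i1] := in_take_le xt; have [x2 i2] := in_drop_ge uP xd.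
      exact: (TD _ _ _ x (Fn _ h) h (Fsg1 _ h) x1 i1 x2 i2).
    + move=> x0; move: (hQ x0) mQ; rewrite /P; case: (nth [::] L1 (pf (nx (sg i)))) => [|q0 Q'] //=.
    + move=> x0; have Dne : drop (index (b (sg i)) (P i)) (P i) != [::] by rewrite -size_eq0 size_drop subn_eq0 -ltnNge.
      rewrite last_cat (last_indep _ x0 Dne); have := lP x0.
      by rewrite -[nth [::] L1 i](cat_take_drop (index (b (sg i)) (P i))) last_cat (last_indep _ x0 Dne).



  - move=> i j ik jk nij x; rewrite !nthL // => xi; apply/negP => xj.
    case: (Mem i x ik xi) => [[hi Hi]|[hi xPi]]; case: (Mem j x jk xj) => [[hj Hj]|[hj xPj]].
    + case: Hi => [[x1 i1]|[x1 i1]]; case: Hj => [[x2 i2]|[x2 i2]].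
      * have [k1 _ _ _ _] := F1 _ (Fn _ hi); have [k2 _ _ _ _] := F1 _ (Fn _ hj).
        have e := lk_disj HL1 k1 k2 x1 x2; have e2 := Fnx _ _ hi hj (F2 _ _ (Fn _ hi) (Fn _ hj) e).
        by move: nij; rewrite -(Fsg1 _ hi) -(Fsg1 _ hj) e2 eqxx.
      * exact: (TD _ _ _ x (Fn _ hi) hj (Fsg1 _ hj) x1 i1 x2 i2).
      * exact: (TD _ _ _ x (Fn _ hj) hi (Fsg1 _ hi) x2 i2 x1 i1).
      * by move: nij; rewrite (lk_disj HL1 ik jk x1 x2) eqxx.
    + case: Hi => [[x1 i1]|[x1 i1]].
      * have [k1 _ _ _ _] := F1 _ (Fn _ hi).
        have e := lk_disj HL1 k1 jk x1 xPj; by rewrite (Fsg2 _ _ (Fn _ hi) e) leqNgt Fn in hj.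
      * by move: nij; rewrite (lk_disj HL1 ik jk x1 xPj) eqxx.
    + case: Hj => [[x2 i2]|[x2 i2]].
      * have [k2 _ _ _ _] := F1 _ (Fn _ hj).
        have e := lk_disj HL1 k2 ik x2 xPi; by rewrite (Fsg2 _ _ (Fn _ hj) e) leqNgt Fn in hi.
      * by move: nij; rewrite (lk_disj HL1 ik jk xPi x2) eqxx.
    + by move: nij; rewrite (lk_disj HL1 ik jk xPi xPj) eqxx.
pose u := a 0.
have [k0 u0 b0 lt0 _] := F1 0 n0.
have [sP0 uP0 _ _ _] := lk_path HL1 (lk_nth_in HL1 k0).
have e0s : (index u (P (pf 0))).+1 < size (P (pf 0)).
  by apply: (leq_ltn_trans lt0); rewrite index_mem.
pose v := nth u (P (pf 0)) (index u (P (pf 0))).+1.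
have Fuv : F u v.
  move/(sortedP u): sP0 => H; have := H _ e0s; by rewrite nth_index.
have idxv : index v (P (pf 0)) = (index u (P (pf 0))).+1 by rewrite index_uniq.
have Adj : adj (P (pf 0)) u v.
  exists (take (index u (P (pf 0))) (P (pf 0))), (drop (index u (P (pf 0))).+2 (P (pf 0))).
  rewrite -{1}(cat_take_drop (index u (P (pf 0))) (P (pf 0))) (drop_nth u) ?(ltn_trans _ e0s) //.
  by rewrite (drop_nth u) // nth_index.
case: (boolP (Bjb L2 u v)) => Huv.
  apply: (Hsh u v); last exact/BjP.
  by exists (P (pf 0)); [exact: (lk_nth_in HL1 k0) | left].
apply: (Hdel L1' u v Fuv); last first.
  move=> q qB; have [sq _ _ _ _] := lk_path HL2 qB; apply: sorted_del_noadj => // Ha;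
    move/negP: Huv; apply; apply/hasP; exists q => //; apply/orP; [left|right]; exact/adjP.
apply: lk_del HL' _ => q /mapP [i]; rewrite mem_iota add0n => /andP[_ ik] ->.
have Pin := lk_nth_in HL1 ik; have [sP uP _ _ _] := lk_path HL1 Pin.
have unot : forall j, j < k -> j != pf 0 -> u \notin P j.
  move=> j jk nj; apply/negP=> uj; move: nj; by rewrite (lk_disj HL1 jk k0 uj u0) eqxx.
rewrite /newp; case: ltnP => h; last first.
  apply: sorted_del_notin => //; rewrite (unot i ik) //.
  apply/negP=> /eqP ei; have := Fsg2 _ _ n0 (esym ei); move=> e; by rewrite e leqNgt n0 in h.
have [k1 a1 _ _ _] := F1 _ (Fn _ h).
have [_ _ b2 _ _] := F1 _ h; rewrite Fsg1 // in b2.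
have Qin := lk_nth_in HL1 k1; have [sQ uQ _ _ _] := lk_path HL1 Qin.
have mQ : index (a (nx (sg i))) (P (pf (nx (sg i)))) < size (P (pf (nx (sg i))))
  by rewrite index_mem.
have iP : index (b (sg i)) (P i) < size (P i) by rewrite index_mem.
apply: (@splice _ _ (a 0) _ _ _ _ mQ iP).
- apply: sorted_del_notin; first exact: take_sorted.
  case: (eqVneq (pf (nx (sg i))) (pf 0)) => et.
  + have t0 : nx (sg i) = 0 := F2 _ _ (Fn _ h) n0 et.
    apply/orP; right; apply/negP => vt; have [_ iv] := in_take_le vt.
    by move: iv; rewrite t0 idxv ltnn.
  + apply/orP; left; apply/negP=> ut; have := mem_take ut; by rewrite (negbTE (unot _ k1 et)).
- apply: sorted_del_notin; first exact: drop_sorted.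
  case: (eqVneq i (pf 0)) => ei.
  + have s0 : sg i = 0 := Fsg2 _ _ n0 (esym ei).
    apply/orP; left; apply/negP => ud; have [_ iu] := in_drop_ge uP ud.
    by move: iu; rewrite s0 ei leqNgt lt0.
  + apply/orP; left; apply/negP => ud; have := mem_drop ud; by rewrite (negbTE (unot _ ik ei)).
- rewrite !nth_index // /del_edge Fj //=.
  apply/negP => /orP[/andP[/eqP e1 /eqP e2]|/andP[/eqP e1 /eqP e2]]; move/negP: Huv; apply.
  + by have := FJ _ h; rewrite e1 e2 => /Bjs.
  + by have := FJ _ h; rewrite e1 e2.
Qed.



Lemma no_bad (W : finType) (F : rel W) Sa Ta Sb Tb k L1 L2 :
  symmetric F -> linkage F Sa Ta k L1 -> linkage F Sb Tb k L2 ->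
  (forall L1' u v, F u v -> linkage (del_edge F u v) Sa Ta k L1' ->
      (forall q, q \in L2 -> sorted (del_edge F u v) q) -> False) ->
  (forall u v, (exists2 p, p \in L1 & adj p u v \/ adj p v u) -> Bj L2 u v -> False) ->
  forall c, bad L1 L2 c -> False.
Proof.
move=> sF HL1 HL2 Hdel Hsh c; elim: {c}(size c).+1 {-2}c (ltnSn (size c)) => // N IH c lt Hb.
case: (boolP (uniq (map (fun ab => pid L1 ab.1) c))) => Hu.
  exact: (reroute sF HL1 HL2 Hb Hu Hdel Hsh).
have [c' [Hb' lt']] := shortcut HL1 Hb Hu.
by apply: (IH c') => //; apply: leq_trans lt' _.
Qed.

Fixpoint jlink (W : eqType) (L1 L2 : seq (seq W)) (x : W) (ps : seq (W * W)) (y : W) : Prop :=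
  match ps with
  | [::] => Bj L2 x y
  | ab :: ps' => [/\ Bj L2 x ab.1, Rfw L1 ab.1 ab.2 & jlink L1 L2 ab.2 ps' y]
  end.

Lemma jlink_path (W : eqType) (L1 L2 : seq (seq W)) ps : forall b a z w,
  jlink L1 L2 b ps a -> path (J L2) (z, b) (rcons ps (a, w)).
Proof.
elim: ps => [|[a1 b1] ps IH] b a z w /=; first by move/BjP=> H; rewrite /J /= H.
by case=> /BjP H1 _ H3; rewrite /J /= H1 (IH b1 a a1 w H3).
Qed.

Lemma jlink_rfw (W : eqType) (L1 L2 : seq (seq W)) ps : forall b a,
  jlink L1 L2 b ps a -> forall ab, ab \in ps -> Rfw L1 ab.1 ab.2.
Proof.
elim: ps => [|[a1 b1] ps IH] b a //= [_ H2 H3] ab; rewrite inE => /orP[/eqP -> //|abin].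
exact: IH H3 _ abin.
Qed.

Lemma jlink_bad (W : eqType) (L1 L2 : seq (seq W)) a b ps :
  jlink L1 L2 b ps a -> Rfw L1 a b -> bad L1 L2 ((a, b) :: ps).
Proof.
move=> Hj Hr; split=> //.
- move=> ab; rewrite inE => /orP[/eqP -> //|]; exact: jlink_rfw Hj ab.
- exact: jlink_path Hj.
Qed.

Lemma walk (W : finType) (F : rel W) S T k L1 L2 : linkage F S T k L1 ->
  forall s col x, s != [::] -> chain L1 L2 col x s ->
  (col /\ exists y, s = [:: y] /\ Rfw L1 x y) \/
  exists y0 x' ps, [/\ (if col then Rfw L1 x y0 else y0 = x),
                      (x' = last x s \/ Rfw L1 x' (last x s)) & jlink L1 L2 y0 ps x'].
Proof.
move=> HL; elim=> [//|y s' IH] col x _ [Harc Hch].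
case: s' IH Hch => [|z s''] IH Hch.
- case: col Harc => /= Harc.
  + by left; split=> //; exists y; split=> //; exact: arc_Rfw HL Harc.
  + by right; exists x, y, [::]; split=> //; [left|exact: arc_Bj].
- case: col Harc Hch => /= Harc Hch.
  + have := IH false y isT Hch; case=> [[//]|[y0 [x' [ps [/= e Hl Hj]]]]].
    subst y0; right; exists y, x', ps; split=> //; exact: arc_Rfw HL Harc.
  + have := IH true y isT Hch; case=> [[_ [z' [ez Hr]]]|[y0 [x' [ps [/= Hr Hl Hj]]]]].
    * case: ez => ez es; subst z s''; right; exists x, y, [::]; split=> //=.
      - by right.
      - exact: arc_Bj.
    * right; exists x, x', ((y, y0) :: ps); split=> //=; split=> //; exact: arc_Bj.
Qed.

Lemma chain_drop (W : finType) (L1 L2 : seq (seq W)) i : forall s col x, i <= size s ->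
  chain L1 L2 col x s -> chain L1 L2 (col (+) odd i) (nth x (x :: s) i) (drop i s).
Proof.
elim: i => [|i IH] s col x; first by rewrite addbF drop0.
case: s => [|y s] //= lt [_ Hc]; have := IH s (~~ col) y lt Hc.
by rewrite (set_nth_default y) //= ?ltnS // addbN addNb.
Qed.

Lemma chain_take (W : finType) (L1 L2 : seq (seq W)) m s : forall col x,
  chain L1 L2 col x s -> chain L1 L2 col x (take m s).
Proof.
elim: s m => [|y s IH] [|m] col x //= [H1 H2]; split=> //; exact: IH.
Qed.

Lemma chain_swap (W : finType) (R B : seq (seq W)) s : forall c x,
  chain R B c x s -> chain B R (~~ c) x s.
Proof.
elim: s => [|y s IH] c x //= [H1 H2]; split; first by move: H1 {H2}; case: c.
exact: IH.
Qed.

Lemma main_gen (W : finType) (F : rel W) Sa Ta Sb Tb k L1 L2 :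
  symmetric F -> linkage F Sa Ta k L1 -> linkage F Sb Tb k L2 ->
  (forall L1' u v, F u v -> linkage (del_edge F u v) Sa Ta k L1' ->
      (forall q, q \in L2 -> sorted (del_edge F u v) q) -> False) ->
  (forall u v, (exists2 p, p \in L1 & adj p u v \/ adj p v u) -> Bj L2 u v -> False) ->
  forall (c : bool) (z0 : W) (zs : seq W), chain L1 L2 c z0 zs ->
  forall P : seq W, P \in L1 ->
  forall v v' : W, v != v' -> v \in P -> v' \in P ->
  (exists i j, [/\ i < j, j < size (z0 :: zs),
                   nth z0 (z0 :: zs) i = v & nth z0 (z0 :: zs) j = v']) ->
  index v P < index v' P.
Proof.
move=> sF HL1 HL2 Hdel Hsh c z0 zs Hch P PL v v' nvv vP v'P [i [j [ij jn ei ej]]].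
have jn' : j <= size zs := jn.
rewrite ltn_neqAle; apply/andP; split.
  by apply: contraNneq nvv => e; rewrite -(nth_index v vP) e nth_index.
rewrite leqNgt; apply/negP=> lt.
have Rv'v : Rfw L1 v' v by exists P.
have iz : i <= size zs by lia.
have Hd := chain_drop iz Hch; rewrite ei in Hd.
have Ht := chain_take (j - i) Hd.
have szd : size (drop i zs) = size zs - i by rewrite size_drop.
have ne : take (j - i) (drop i zs) != [::].
  by rewrite -size_eq0 size_take szd; case: ltnP; lia.
have Hlast : last v (take (j - i) (drop i zs)) = v'.
  have e1 : j - i = (j - i).-1.+1 by lia.
  rewrite e1 (take_nth v) ?szd; last by lia.
  rewrite last_rcons nth_drop -ej (set_nth_default z0); last by lia.
  have j0 : 0 < j by lia.
  rewrite -[in RHS](prednK j0) /=; congr nth; lia.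
have := walk HL1 ne Ht; rewrite Hlast; case.
- case=> _ [y [ey Hr]]; move: Hlast; rewrite ey /= => ey'; subst y.
  have [_ lt2] := Rfw_path HL1 Hr PL vP; lia.
- case=> y0 [x' [ps [Hy0 Hx' Hj]]].
  have Rvy0 : v = y0 \/ Rfw L1 v y0 by case: (c (+) odd i) Hy0 => /= H; [right|left].
  have Rx'v : Rfw L1 x' v.
    case: Hx' => [->//|H]; exact: Rfw_trans HL1 H Rv'v.
  have Rx'y0 : Rfw L1 x' y0 by case: Rvy0 => [<-//|H]; exact: Rfw_trans HL1 Rx'v H.
  exact: (no_bad sF HL1 HL2 Hdel Hsh (jlink_bad Hj Rx'y0)).
Qed.


Theorem claim2p6 (V : finType) (E : rel V) (S1 T1 S2 T2 : {set V}) (k : nat)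
    (W : finType) (F : rel W) (h : V -> W) (R B : seq (seq W)) :
  simple_graph E ->
  #|S1| = k -> #|T1| = k -> #|S2| = k -> #|T2| = k ->
  [disjoint S1 & T1] -> [disjoint S1 & S2] -> [disjoint S1 & T2] ->
  [disjoint T1 & S2] -> [disjoint T1 & T2] -> [disjoint S2 & T2] ->
  (forall x, x \in terminals S1 T1 S2 T2 -> #|[set y | E x y]| = 1) ->
  routable E S1 T1 k -> routable E S2 T2 k ->
  simple_graph F ->
  minimal_minor E S1 T1 S2 T2 k F h ->
  linkage F (h @: S1) (h @: T1) k R ->
  linkage F (h @: S2) (h @: T2) k B ->
  forall (c : bool) (z0 : W) (zs : seq W), chain R B c z0 zs ->
  forall P : seq W, (P \in R) || (P \in B) ->
  forall v v' : W, v != v' -> v \in P -> v' \in P ->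
  (exists i j, [/\ i < j, j < size (z0 :: zs),
                   nth z0 (z0 :: zs) i = v & nth z0 (z0 :: zs) j = v']) ->
  index v P < index v' P.
Proof.
move=> sE c1 c2 c3 c4 d1 d2 d3 d4 d5 d6 deg rt1 rt2 sF Hmin HR HB.
have C : ctx E S1 T1 S2 T2 k F h R B by constructor.
move=> c z0 zs Hch P /orP[PR|PB].
- apply: (main_gen sF.1 HR HB _ _ Hch PR).
  + move=> L1' u v Fuv HL1' Hq; exact: (del_contra C Fuv HL1' (lk_del HB Hq)).
  + move=> u v Hp Hb; exact: (shared_contra C Hp Hb).
- apply: (main_gen sF.1 HB HR _ _ (chain_swap Hch) PB).
  + move=> L1' u v Fuv HL1' Hq; exact: (del_contra C Fuv (lk_del HR Hq) HL1').
  + move=> u v [q qB Hq] Hb; apply: (shared_contra C Hb); by exists q.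
Qed.
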